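(* Let $n\ge0$ and let $f$ be a stable real-rational all-pass function of order $n$ with unit gain ($|f(e^{j\omega})|=1$ for all $\omega$) all of whose poles are real (no poles if $n=0$). Then for every $\omega_p\in(-\pi,\pi)\setminus\{0\}$, $$\theta_f'(\omega_p)\le-\left|\frac{\sin(\theta_f(\omega_p))}{\sin\omega_p}\right|,$$ and equality holds for all such $\omega_p$ when $n=0$ or $n=1$.
   Context: Stable means all poles in the open unit disk. $\theta_f(\omega):=\angle f(e^{j\omega})$ is a continuous choice of argument and $\theta_f'(\omega)$ its derivative with respect to $\omega$ (the quantity $\sin\theta_f(\omega_p)$ is independent of the branch). *)

(* Defs.v *)
From HB Require Import structures.
From mathcomp Require Import all_boot all_order all_algebra.
From mathcomp Require Import all_classical all_reals all_analysis.
From mathcomp Require Import complex.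
Set Implicit Arguments. Unset Strict Implicit. Unset Printing Implicit Defensive.
Import Order.TTheory GRing.Theory Num.Theory.
Import numFieldNormedType.Exports.
Local Open Scope ring_scope.

(* A real-rational function f = p / q is represented by a pair of real
   polynomials p, q : {poly R}.  Its complex extension lifts the coefficients
   into R[i]. *)

Definition expj (R : realType) (w : R) : R[i] := Complex (cos w) (sin w).

Definition rat_eval (R : realType) (p q : {poly R}) (z : R[i]) : R[i] :=
  (map_poly (real_complex R) p).[z] / (map_poly (real_complex R) q).[z].

(* complex poles of f = p/q (p, q coprime): the complex roots of q *)
Definition is_pole (R : realType) (p q : {poly R}) (z : R[i]) : Prop :=
  root (map_poly (real_complex R) q) z.

(* order (McMillan degree) of p/q, for coprime p, q *)
Definition rat_order (R : realType) (p q : {poly R}) : nat :=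
  maxn (size p).-1 (size q).-1.

Definition real_rational (R : realType) (p q : {poly R}) : Prop :=
  q != 0 /\ coprimep p q.

(* stable: all poles (finite ones, and no pole at infinity, i.e. proper)
   lie in the open unit disk *)
Definition stable (R : realType) (p q : {poly R}) : Prop :=
  (size p <= size q)%N /\ forall z : R[i], is_pole p q z -> Normc.normc z < 1.

Definition unit_allpass (R : realType) (p q : {poly R}) : Prop :=
  forall w : R, Normc.normc (rat_eval p q (expj w)) = 1.

Definition real_poles (R : realType) (p q : {poly R}) : Prop :=
  forall z : R[i], is_pole p q z -> Im z = 0.

Definition cont_arg (R : realType) (p q : {poly R}) (theta : R -> R) : Prop :=
  continuous theta /\ forall w : R, rat_eval p q (expj w) = expj (theta w).

(* Main.v *)
Require Import Defs.
From HB Require Import structures.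
From mathcomp Require Import all_boot all_order all_algebra.
From mathcomp Require Import all_classical all_reals all_analysis.
From mathcomp Require Import complex.
From mathcomp Require Import ring lra.
Import Order.TTheory GRing.Theory Num.Theory.
Import numFieldNormedType.Exports.
Local Open Scope ring_scope.

Section S.
Variable R : realType.

Definition tt_ (a w : R) := a * sin w / (1 - a * cos w).
Definition phi (a w : R) : R := - w - 2 * atan (tt_ a w).

Lemma den_gt0 (a w : R) : -1 < a < 1 -> 0 < 1 - a * cos w.
Proof.
move=> /andP[a1 a2]; rewrite subr_gt0.
have hc := cos_max w.
apply: le_lt_trans (ler_norm _) _.
rewrite normrM; apply: le_lt_trans (_ : `|a| * 1 < 1).
  by rewrite ler_wpM2l.
by rewrite mulr1 ltr_norml a1 a2.
Qed.

Lemma is_derive_den (a w : R) : is_derive w 1 (fun w => 1 - a * cos w) (a * sin w).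
Proof.
apply: is_derive_eq; rewrite /GRing.scale /=. lra.
Qed.

Lemma sin2E (w : R) : sin w ^+ 2 = 1 - cos w ^+ 2.
Proof. by rewrite -(cos2Dsin2 w) addrAC subrr add0r. Qed.

Lemma is_derive_tt (a w : R) : -1 < a < 1 ->
  is_derive w 1 (tt_ a) ((a * cos w * (1 - a * cos w) - a^+2 * (1 - cos w ^+ 2)) / (1 - a * cos w)^+2).
Proof.
move=> ha; have d0 := den_gt0 a w ha.
have hV := @is_deriveV _ (fun w => 1 - a * cos w) w _ _ (lt0r_neq0 d0) (is_derive_den a w).
have hs : is_derive w 1 (fun w => a * sin w) (a * cos w).
  by apply: is_derive_eq; rewrite /GRing.scale /=.
have H := is_deriveM hs hV.
rewrite /tt_; apply: (is_derive_eq H).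
rewrite /GRing.scale /= -sin2E. field. by rewrite lt0r_neq0.
Qed.

Lemma E_gt0 (a w : R) : -1 < a < 1 -> 0 < 1 - 2 * a * cos w + a ^+ 2.
Proof.
move=> /andP[a1 a2]; have := cos_max w; rewrite ler_norml => /andP[c1 c2].
have [a0|a0] := leP 0 a.
  have h1 : 0 <= a * (1 - cos w) by rewrite mulr_ge0 // subr_ge0.
  have h2 : 0 < (1 - a) ^+ 2 by rewrite exprn_gt0 // subr_gt0.
  have -> : 1 - 2 * a * cos w + a ^+ 2 = (1 - a) ^+ 2 + 2 * (a * (1 - cos w)) by ring.
  by rewrite ltr_wpDr // mulr_ge0.
have h1 : 0 <= (- a) * (1 + cos w) by rewrite mulr_ge0 // ?oppr_ge0 ?ltW // -lerBlDl sub0r.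
have h2 : 0 < (1 + a) ^+ 2 by rewrite exprn_gt0 // -ltrBlDl sub0r.
have -> : 1 - 2 * a * cos w + a ^+ 2 = (1 + a) ^+ 2 + 2 * ((- a) * (1 + cos w)) by ring.
by rewrite ltr_wpDr // mulr_ge0.
Qed.

Lemma tt_sq (a w : R) : -1 < a < 1 ->
  1 + tt_ a w ^+ 2 = (1 - 2 * a * cos w + a ^+ 2) / (1 - a * cos w) ^+ 2.
Proof.
move=> ha; have d0 := den_gt0 a w ha.
rewrite /tt_ expr_div_n exprMn sin2E. field. by rewrite lt0r_neq0.
Qed.

Definition dphi (a w : R) := - (1 - a^+2) / (1 - 2 * a * cos w + a^+2).

Lemma is_derive_phi (a w : R) : -1 < a < 1 ->
  is_derive w 1 (phi a) (dphi a w).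
Proof.
move=> ha; have d0 := den_gt0 a w ha; have e0 := E_gt0 a w ha.
have H1 := is_derive1_comp (is_derive1_atan (tt_ a w)) (is_derive_tt a w ha).
have H2 := is_deriveZ 2 H1.
have H3 := is_deriveB (is_deriveNid w 1) H2.
rewrite /phi; apply: (is_derive_eq H3).
rewrite /GRing.scale /= tt_sq // /dphi. field.
by rewrite !lt0r_neq0.
Qed.

End S.
Arguments phi {R}. Arguments tt_ {R}. Arguments dphi {R}.
Arguments den_gt0 {R}. Arguments E_gt0 {R}. Arguments is_derive_phi {R}. Arguments tt_sq {R}. Arguments sin2E {R}.


Local Open Scope complex_scope.

Section C.
Variable R : realType.
Implicit Types x y : R[i].
Local Notation Re := (@complex.Re R).
Local Notation Im := (@complex.Im R).

Lemma ReM x y : Re (x * y) = Re x * Re y - Im x * Im y.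
Proof. by case: x => a b; case: y => c d. Qed.
Lemma ImM x y : Im (x * y) = Re x * Im y + Im x * Re y.
Proof. by case: x => a b; case: y => c d. Qed.
Lemma ReD x y : Re (x + y) = Re x + Re y.
Proof. by case: x => a b; case: y => c d. Qed.
Lemma ImD x y : Im (x + y) = Im x + Im y.
Proof. by case: x => a b; case: y => c d. Qed.
Lemma ReN x : Re (- x) = - Re x.
Proof. by case: x => a b. Qed.
Lemma ImN x : Im (- x) = - Im x.
Proof. by case: x => a b. Qed.
Lemma ReB x y : Re (x - y) = Re x - Re y.
Proof. by rewrite ReD ReN. Qed.
Lemma ImB x y : Im (x - y) = Im x - Im y.
Proof. by rewrite ImD ImN. Qed.
Lemma ReJ x : Re ((conjc x)) = Re x.
Proof. by case: x. Qed.
Lemma ImJ x : Im ((conjc x)) = - Im x.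
Proof. by case: x. Qed.
Lemma Rec (a : R) : Re (a%:C) = a. Proof. by []. Qed.
Lemma Imc (a : R) : Im (a%:C) = 0. Proof. by []. Qed.
Lemma Re1 : Re (1 : R[i]) = 1. Proof. by []. Qed.
Lemma Im1 : Im (1 : R[i]) = 0. Proof. by []. Qed.
Lemma cE x y : Re x = Re y -> Im x = Im y -> x = y.
Proof. by case: x => a b; case: y => c d /= -> ->. Qed.

Lemma ReC (a b : R) : Re (Complex a b) = a. Proof. by []. Qed.
Lemma ImC (a b : R) : Im (Complex a b) = b. Proof. by []. Qed.
Lemma Reexpj (u : R) : Re (expj u) = cos u. Proof. by []. Qed.
Lemma Imexpj (u : R) : Im (expj u) = sin u. Proof. by []. Qed.
Definition cs := (ReC, ImC, Reexpj, Imexpj, ReM, ImM, ReB, ImB, ReD, ImD, ReN, ImN, ReJ, ImJ, Rec, Imc, Re1, Im1).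

Lemma conjM x y : (conjc (x * y)) = (conjc x) * (conjc y).
Proof. by apply: cE; rewrite !cs; ring. Qed.
Lemma conjB x y : (conjc (x - y)) = (conjc x) - (conjc y).
Proof. by apply: cE; rewrite !cs; ring. Qed.
Lemma conjR (a : R) : (conjc (a%:C)) = a%:C.
Proof. by apply: cE; rewrite !cs; ring. Qed.

Lemma expjD (u v : R) : expj (u + v) = expj u * expj v.
Proof. by apply: cE; rewrite !cs /= ?cosD ?sinD //; ring. Qed.

Lemma expjN (u : R) : expj (- u) = (conjc (expj u)).
Proof. by apply: cE; rewrite !cs /= ?cosN ?sinN. Qed.

Lemma expjJ (u : R) : expj u * (conjc (expj u)) = 1.
Proof. by apply: cE; rewrite !cs /= ?cos2Dsin2; [rewrite -(cos2Dsin2 u); ring | ring]. Qed.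

Lemma Im_real (z : R[i]) : Num.Theory.Im z = 0 -> Im z = 0.
Proof.
move/Creal_ImP; rewrite realE; case: z => a b /=.
by rewrite /Order.le /=; case/orP => /andP[/eqP -> _].
Qed.

Lemma factor (a w : R) : -1 < a < 1 ->
  expj w * (conjc (expj w - a%:C)) / (expj w - a%:C) = expj (phi a w).
Proof.
move=> ha; have d0 := den_gt0 a w ha.
set z := expj w.
have zc : z * (conjc z) = 1 := expjJ w.
set v := 1 - a%:C * (conjc z).
have hv : v = Complex (1 - a * cos w) (a * sin w).
  by apply: cE; rewrite /v /z !cs; ring.
set al := atan (tt_ a w).
set m := cos al / (1 - a * cos w).
have cal : cos al != 0.
  by apply: lt0r_neq0; apply: cos_gt0_pihalf; rewrite atan_gtNpi2 atan_ltpi2.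
have sal : sin al = tt_ a w * cos al.
  by rewrite -[X in X * _](atanK (tt_ a w)) /tan divfK.
have hat : expj al = m%:C * v.
  apply: cE; rewrite hv !cs /m.
    by field; rewrite lt0r_neq0.
  by rewrite sal /tt_; field; rewrite lt0r_neq0.
clearbody m.
have hm : m%:C * v * (m%:C * (conjc v)) = 1.
  by rewrite -(expjJ al) hat; congr (_ * _); apply: cE; rewrite !cs; ring.
have -> : phi a w = - w + (- al) + (- al) by rewrite /phi /al; ring.
rewrite !expjD !expjN hat conjM conjR -/z.
have za : z - a%:C = z * v.
  by rewrite /v mulrBr mulr1 mulrCA zc mulr1.
have z0 : z != 0 by apply/eqP => z0; move: zc; rewrite z0 mul0r => /eqP; rewrite eq_sym oner_eq0.
have v0 : v != 0.
  apply/eqP => v0; have h := congr1 (@complex.Re R) hv; rewrite v0 in h.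
  have h1 : 1 - a * cos w = 0 := esym h. by rewrite h1 ltxx in d0.
rewrite za; apply: (mulIf (mulf_neq0 z0 v0)); rewrite divfK ?mulf_neq0 //.
rewrite conjM.
transitivity ((z * (conjc z)) * (conjc v)); first by ring.
transitivity ((z * (conjc z)) * (m%:C * v * (m%:C * (conjc v))) * (conjc v)); last by ring.
by rewrite hm mulr1.
Qed.

Lemma sin_phi (a w : R) : -1 < a < 1 -> sin (phi a w) = dphi a w * sin w.
Proof.
move=> ha; have e0 := E_gt0 a w ha; have d0 := den_gt0 a w ha.
have za0 : expj w - a%:C != 0.
  apply/eqP => h; have h1 := congr1 (@complex.Re R) h.
  have h3 := congr1 (@complex.Im R) h.
  have h2 : cos w - a = 0 := h1.
  have h4 : sin w - 0 = 0 := h3.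
  case/andP: ha => a1 a2.
  have := cos2Dsin2 w; nra.
have key : expj (phi a w) * (expj w - a%:C) = expj w * conjc (expj w - a%:C).
  by rewrite -factor // divfK.
have eR := congr1 (@complex.Re R) key; have eI := congr1 (@complex.Im R) key.
rewrite !cs in eR eI.
have hcs := cos2Dsin2 w.
set S := sin (phi a w) in eR eI *; set C := cos (phi a w) in eR eI *.
set c := cos w in eR eI hcs *; set s := sin w in eR eI hcs *.
have eI' := congr1 (fun t => (c - a) * t) eI.
have eR' := congr1 (fun t => s * t) eR.
have hcs' := congr1 (fun t => s * t) hcs.
have h1 : S * (1 - 2 * a * c + a ^+ 2) = - (1 - a ^+ 2) * s.
  simpl in eI', eR', hcs'.
  have hcs'' := congr1 (fun t => S * t) hcs. simpl in hcs''.
  lra.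
rewrite /dphi -/c.
have -> : S = (S * (1 - 2 * a * c + a ^+ 2)) / (1 - 2 * a * c + a ^+ 2).
  by field; rewrite lt0r_neq0.
by rewrite h1; field; rewrite lt0r_neq0.
Qed.

End C.
Arguments Im_real {R}. Arguments factor {R}. Arguments sin_phi {R}. Arguments expjD {R}. Arguments expjN {R}. Arguments expjJ {R}. Arguments conjM {R}. Arguments conjB {R}. Arguments conjR {R}. Arguments cE {R}.


Local Open Scope complex_scope.

Section P.
Variable R : realType.

Definition okseq (s : seq R) := all (fun a => (-1 < a < 1)) s.
Definition Phi (e : R) (s : seq R) (w : R) := e + \sum_(a <- s) phi a w.
Definition dPhi (s : seq R) (w : R) := \sum_(a <- s) dphi a w.

Lemma expj0 : expj (0 : R) = 1.
Proof. by apply: cE; rewrite !cs ?cos0 ?sin0. Qed.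

Lemma prod_factor (s : seq R) (w : R) : okseq s ->
  \prod_(a <- s) (expj w * conjc (expj w - a%:C) / (expj w - a%:C)) =
  expj (\sum_(a <- s) phi a w).
Proof.
elim: s => [|a s IH] /=; first by rewrite !big_nil expj0.
case/andP => ha hs; rewrite !big_cons IH // factor // expjD //.
Qed.

Lemma is_derive_sumphi (s : seq R) (w : R) : okseq s ->
  is_derive w 1 (fun w => \sum_(a <- s) phi a w) (dPhi s w).
Proof.
elim: s => [|a s IH] /=.
  have -> : (fun w : R => \sum_(a <- [::]) phi a w) = cst 0.
    by apply/funext => x; rewrite big_nil.
  by move=> _; rewrite /dPhi big_nil; apply: is_derive_cst.
case/andP => ha hs.
have -> : (fun w : R => \sum_(b <- a :: s) phi b w) = (phi a + (fun w => \sum_(b <- s) phi b w)).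
  by apply/funext => x; rewrite big_cons.
rewrite /dPhi big_cons.
exact: is_deriveD (is_derive_phi a w ha) (IH hs).
Qed.

Lemma is_derive_Phi (e : R) (s : seq R) (w : R) : okseq s ->
  is_derive w 1 (Phi e s) (dPhi s w).
Proof.
move=> hs; have H := is_deriveD (is_derive_cst e w 1) (is_derive_sumphi s w hs).
rewrite /Phi; apply: (is_derive_eq H); by rewrite add0r.
Qed.

Lemma sin_sum_le (s : seq R) (f : R -> R) :
  `|sin (\sum_(a <- s) f a)| <= \sum_(a <- s) `|sin (f a)|.
Proof.
elim: s => [|a s IH]; first by rewrite !big_nil sin0 normr0.
rewrite !big_cons sinD.
apply: le_trans (ler_normD _ _) _.
rewrite !normrM; apply: lerD.
  by rewrite -[leRHS]mulr1 ler_wpM2l // cos_max.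
apply: (le_trans _ IH); by rewrite -[leRHS]mul1r ler_wpM2r // cos_max.
Qed.

Lemma dphi_le0 (a w : R) : -1 < a < 1 -> dphi a w <= 0.
Proof.
move=> ha; have e0 := E_gt0 a w ha; rewrite /dphi mulNr oppr_le0.
by apply: divr_ge0; [case/andP: ha => a1 a2; nra | exact: ltW].
Qed.

Lemma sumsin (s : seq R) (w : R) : okseq s ->
  \sum_(a <- s) `|sin (phi a w)| = - dPhi s w * `|sin w|.
Proof.
elim: s => [|a s IH]; first by rewrite /dPhi !big_nil oppr0 mul0r.
case/andP => ha hs; rewrite /dPhi !big_cons IH // /dPhi.
rewrite sin_phi // normrM ler0_norm ?dphi_le0 //; ring.
Qed.

Lemma sinE (e x : R) : e = 0 \/ e = pi -> `|sin (e + x)| = `|sin x|.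
Proof.
by case=> ->; rewrite ?add0r // sinD sinpi cospi mul0r add0r mulN1r normrN.
Qed.

Lemma main_ineq (e : R) (s : seq R) (w : R) : okseq s -> e = 0 \/ e = pi ->
  sin w != 0 ->
  dPhi s w <= - `|sin (Phi e s w) / sin w| /\
  ((size s <= 1)%N -> dPhi s w = - `|sin (Phi e s w) / sin w|).
Proof.
move=> hs he sw0.
have sp : 0 < `|sin w| by rewrite normr_gt0.
rewrite normrM normrV ?unitfE // /Phi sinE //.
split.
  rewrite lerNr ler_pdivrMr // -sumsin //; exact: sin_sum_le.
case: s hs => [|a [|b s]] //= hs _.
  by rewrite /dPhi !big_nil sin0 normr0 mul0r oppr0.
rewrite /dPhi !big_seq1; case/andP: hs => ha _.
rewrite sin_phi // normrM ler0_norm ?dphi_le0 //; field.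
by rewrite normr_eq0.
Qed.

End P.
Arguments okseq {R}. Arguments Phi {R}. Arguments dPhi {R}.
Arguments prod_factor {R}. Arguments is_derive_Phi {R}. Arguments main_ineq {R}. Arguments expj0 {R}.


Local Open Scope complex_scope.

Section Q.
Variable R : realType.
Local Notation pc P := (map_poly (real_complex R) P).

Lemma normc_real (a : R) : Normc.normc (a%:C) = `|a|.
Proof. by rewrite /Normc.normc /= expr0n /= addr0 sqrtr_sqr. Qed.

Lemma roots_q (p q : {poly R}) : real_rational p q -> real_poles p q -> stable p q ->
  exists s : seq R, okseq s /\ size s = (size q).-1 /\
   forall x, (pc q).[x] = (lead_coef q)%:C * \prod_(a <- s) (x - a%:C).
Proof.
case=> q0 _ hrp [_ hst].
have lq0 : lead_coef (pc q) != 0.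
  by rewrite lead_coef_eq0 map_poly_eq0.
have [r hr] := closed_field_poly_normal (pc q).
have hroot z : z \in r -> is_pole p q z.
  by move=> hz; rewrite /is_pole hr rootZ // root_prod_XsubC.
have hzr z : z \in r -> z = (complex.Re z)%:C.
  move=> hz; have := Im_real _ (hrp z (hroot z hz)).
  by case: z {hz} => a b /= ->.
exists (map (@complex.Re R) r); split.
  rewrite /okseq all_map; apply/allP => z hz /=.
  have := hst z (hroot z hz); rewrite (hzr z hz) normc_real.
  by rewrite ltr_norml.
split.
  rewrite size_map -(size_map_poly (real_complex R) q) hr size_scale //.
  by rewrite size_prod_XsubC.
move=> x; rewrite {1}hr hornerZ horner_prod lead_coef_map big_map.
congr (_ * _); apply: eq_big_seq => z hz.
by rewrite hornerXsubC -hzr.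
Qed.

Lemma conjD (x y : R[i]) : conjc (x + y) = conjc x + conjc y.
Proof. by apply: cE; rewrite !cs; ring. Qed.
Lemma conj0 : conjc (0 : R[i]) = 0.
Proof. by apply: cE; rewrite !cs /=; ring. Qed.
Lemma conj1 : conjc (1 : R[i]) = 1.
Proof. by apply: cE; rewrite !cs /=; ring. Qed.
Lemma conjX (x : R[i]) n : conjc (x ^+ n) = (conjc x) ^+ n.
Proof. by elim: n => [|n IH]; rewrite ?expr0 ?conj1 // !exprS conjM IH. Qed.

Definition revp (N : nat) (P : {poly R}) := \poly_(i < N.+1) P`_(N - i).

Lemma rev_eval N (P : {poly R}) (z : R[i]) : (size P <= N.+1)%N -> z * conjc z = 1 ->
  (pc (revp N P)).[z] = z ^+ N * conjc ((pc P).[z]).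
Proof.
move=> hP zc.
have h1 : (size (pc (revp N P)) <= N.+1)%N by rewrite size_map_poly size_poly.
have h2 : (size (pc P) <= N.+1)%N by rewrite size_map_poly.
rewrite (horner_coef_wide _ h1) (horner_coef_wide _ h2).
rewrite (big_morph _ conjD conj0) mulr_sumr.
rewrite (reindex_inj rev_ord_inj) /=.
apply: eq_bigr => i _.
have hi : (i <= N)%N by rewrite -ltnS.
rewrite !coef_map /= coef_poly /= subSS.
have -> : (N - i < N.+1)%N by rewrite ltnS leq_subr.
rewrite subKn //.
rewrite conjM conjR conjX mulrCA; congr (_ * _).
have -> : z ^+ N = z ^+ (N - i) * z ^+ i by rewrite -exprD subnK.
by rewrite -mulrA -exprMn zc expr1n mulr1.
Qed.

Lemma pik_itv (k : nat) : (pi / (k.+1)%:R : R) \in `[0, pi].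
Proof.
have p0 : (0 : R) < pi := pi_gt0 R.
rewrite in_itv /=; apply/andP; split.
  by rewrite divr_ge0 // ltW.
rewrite ler_pdivrMr ?ltr0Sn //.
by rewrite ler_pMr // ler1n.
Qed.

Lemma circle_zero (D : {poly R}) : (forall w : R, (pc D).[expj w] = 0) -> D = 0.
Proof.
move=> h; apply/eqP; apply: contraT => D0.
have Dc0 : pc D != 0 by rewrite map_poly_eq0.
pose rs := [seq expj (pi / (k.+1)%:R : R) | k <- iota 0 (size (pc D))].
have hall : all (root (pc D)) rs.
  by apply/allP => z /mapP [k _ ->]; rewrite /root h.
have hu : uniq rs.
  rewrite map_inj_in_uniq ?iota_uniq // => k l _ _ /(congr1 (@complex.Re R)).
  rewrite !Reexpj => hc.
  have := cos_inj (pik_itv k) (pik_itv l) hc => e.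
  have p0 : (pi : R) != 0 by rewrite lt0r_neq0 // pi_gt0.
  have : ((k.+1)%:R : R)^-1 = (l.+1)%:R^-1 by apply: (mulfI p0).
  by move/invr_inj/eqP; rewrite eqr_nat => /eqP [].
have := max_poly_roots Dc0 hall hu.
by rewrite size_map size_iota ltnn.
Qed.

Lemma mulconj (x : R[i]) : x * conjc x = (Normc.normc x ^+ 2)%:C.
Proof.
case: x => a b; apply: cE; rewrite !cs /Normc.normc; last by ring. have h := @sqr_sqrtr R (a ^+ 2 + b ^+ 2). rewrite h ?addr_ge0 ?sqr_ge0 //; ring.
Qed.

Lemma normc_expj (w : R) : Normc.normc (expj w) = 1.
Proof. by rewrite /Normc.normc /expj cos2Dsin2 sqrtr1. Qed.

Lemma normcJ' (x : R[i]) : Normc.normc (conjc x) = Normc.normc x.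
Proof. by case: x => a b; rewrite /Normc.normc /= sqrrN. Qed.

Lemma normcX' (x : R[i]) n : Normc.normc (x ^+ n) = Normc.normc x ^+ n.
Proof.
elim: n => [|n IH]; first by rewrite !expr0 Normc.normc1.
by rewrite !exprS Normc.normcM IH.
Qed.

Lemma za_neq0 (a w : R) : -1 < a < 1 -> expj w - a%:C != 0.
Proof.
move=> ha; apply/eqP => h; have h1 := congr1 (@complex.Re R) h.
have h3 := congr1 (@complex.Im R) h.
have h2 : cos w - a = 0 := h1.
have h4 : sin w - 0 = 0 := h3.
case/andP: ha => a1 a2.
have := cos2Dsin2 w; nra.
Qed.

Lemma allpass_facts (p q : {poly R}) : unit_allpass p q -> forall w : R,
  (pc q).[expj w] != 0 /\ Normc.normc ((pc p).[expj w]) = Normc.normc ((pc q).[expj w]).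
Proof.
move=> h w; have := h w; rewrite /rat_eval.
have [->|q0] := eqVneq (pc q).[expj w] 0.
  by rewrite invr0 mulr0 Normc.normc0 => /eqP; rewrite eq_sym oner_eq0.
rewrite Normc.normcM Normc.normcV => e; split => //.
have n0 : Normc.normc (pc q).[expj w] != 0.
  by apply: contra q0 => /eqP /Normc.eq0_normc ->.
by have := congr1 (fun t => t * Normc.normc (pc q).[expj w]) e; rewrite mul1r mulfVK.
Qed.

Lemma key_identity (p q : {poly R}) : q != 0 -> (size p <= size q)%N -> unit_allpass p q ->
  p * revp (size q).-1 p = q * revp (size q).-1 q.
Proof.
move=> q0 hs hap; apply/eqP; rewrite -subr_eq0; apply/eqP; apply: circle_zero => w.
have sq : (size q).-1.+1 = size q by rewrite prednK // size_poly_gt0.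
have [_ hn] := allpass_facts p q hap w.
rewrite rmorphB !rmorphM /= hornerD hornerN !hornerM.
rewrite !rev_eval ?sq ?expjJ //.
rewrite [X in X - _]mulrCA [X in _ - X]mulrCA !mulconj hn; ring.
Qed.

Lemma revp_neq0 N (p : {poly R}) : (size p <= N.+1)%N -> p != 0 -> revp N p != 0.
Proof.
move=> hs; apply: contra => /eqP h; apply/eqP/polyP => j; rewrite coef0.
case: (leqP j N) => hj.
  have := congr1 (fun P : {poly R} => P`_(N - j)) h.
  by rewrite /= coef_poly coef0 ltnS leq_subr subKn.
by rewrite nth_default // (leq_trans hs).
Qed.

Lemma allpass_form (p q : {poly R}) : real_rational p q -> stable p q -> unit_allpass p q ->
  exists k : R, (k = 1 \/ k = -1) /\ forall w : R,
    (pc p).[expj w] = k%:C * expj w ^+ (size q).-1 * conjc ((pc q).[expj w]).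
Proof.
case=> q0 cop [hs _] hap.
set N := (size q).-1.
have sq : N.+1 = size q by rewrite prednK // size_poly_gt0.
have p0 : p != 0.
  apply/eqP => p0; have := hap 0; rewrite /rat_eval p0 rmorph0 horner0 mul0r Normc.normc0.
  by move/eqP; rewrite eq_sym oner_eq0.
have hs' : (size p <= N.+1)%N by rewrite sq.
have rp0 := revp_neq0 N p hs' p0.
have hd : q %| revp N p.
  rewrite -(Gauss_dvdpr (revp N p) (_ : coprimep q p)); last by rewrite coprimep_sym.
  by rewrite key_identity // dvdp_mulIl.
have hsz : size q = size (revp N p).
  by apply/eqP; rewrite eqn_leq (dvdp_leq rp0 hd) /= -sq size_poly.
have /eqpP [[c1 c2] /andP [c10 c20] /= e] : q %= revp N p by rewrite -dvdp_size_eqp // hsz.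
pose k := c1 / c2.
have hP w : (pc p).[expj w] = k%:C * expj w ^+ N * conjc ((pc q).[expj w]).
  have := congr1 (fun P : {poly R} => (pc P).[expj w]) e.
  rewrite /= !map_polyZ !hornerZ rev_eval ?expjJ // => e1.
  have e2 := congr1 (@conjc _) e1.
  rewrite !conjM !conjR conjX conjcK in e2.
  set z := expj w in e2 *; set P := (pc p).[z] in e2 *; set Q := (pc q).[z] in e2 *.
  have zc : z * conjc z = 1 by rewrite /z expjJ.
  have c2c : c2%:C != 0 :> R[i] by apply: contra c20 => /eqP [] ->.
  rewrite /k fmorph_div /=.
  transitivity ((c2%:C)^-1 * z ^+ N * (c1%:C * conjc Q)); last by ring.
  rewrite e2.
  transitivity (((c2%:C)^-1 * c2%:C) * (z ^+ N * conjc z ^+ N) * P); last by ring.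
  by rewrite -exprMn zc expr1n mulVf // !mul1r.
exists k; split => //.
have [Q0 hn] := allpass_facts p q hap 0.
move: hn; rewrite hP !Normc.normcM normcX' normc_expj expr1n mulr1 normcJ' normc_real.
have nQ : Normc.normc (pc q).[expj 0] != 0.
  by apply: contra Q0 => /eqP /Normc.eq0_normc ->.
move=> /(congr1 (fun t => t / Normc.normc (pc q).[expj 0])); rewrite mulfK // divff // => hk.
have [k0|k0] := lerP 0 k.
  by left; rewrite -hk ger0_norm.
by right; rewrite -hk ltr0_norm // opprK.
Qed.

End Q.
Arguments roots_q {R}. Arguments allpass_form {R}. Arguments za_neq0 {R}.


Local Open Scope complex_scope.

Section F.
Variable R : realType.
Local Notation pc P := (map_poly (real_complex R) P).

Lemma prodX_neq0 (s : seq R) (z : R[i]) : (forall a, a \in s -> z - a%:C != 0) ->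
  \prod_(a <- s) (z - a%:C) != 0.
Proof.
elim: s => [|a s IH] h; first by rewrite big_nil oner_eq0.
rewrite big_cons mulf_neq0 ?h ?mem_head // IH // => b hb.
by apply: h; rewrite in_cons hb orbT.
Qed.

Lemma prodfac (s : seq R) (z : R[i]) (lc : R) : lc != 0 ->
  (forall a, a \in s -> z - a%:C != 0) ->
  z ^+ size s * conjc (lc%:C * \prod_(a <- s) (z - a%:C)) / (lc%:C * \prod_(a <- s) (z - a%:C))
  = \prod_(a <- s) (z * conjc (z - a%:C) / (z - a%:C)).
Proof.
move=> lc0; have lcc : lc%:C != 0 :> R[i] by apply: contra lc0 => /eqP [] ->.
elim: s => [|a s IH] h.
  by rewrite !big_nil expr0 mulr1 conjR mul1r divff.
have ha : z - a%:C != 0 by apply: h; rewrite mem_head.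
have hs : forall b, b \in s -> z - b%:C != 0.
  by move=> b hb; apply: h; rewrite in_cons hb orbT.
have X0 := prodX_neq0 _ _ hs.
rewrite !big_cons -(IH hs) /= exprS !conjM conjR.
field.
by rewrite lcc X0 ha.
Qed.

Lemma expj_pi : expj (pi : R) = -1.
Proof. by apply: cE; rewrite !cs ?cospi ?sinpi ?oppr0. Qed.

Lemma structure (p q : {poly R}) : real_rational p q -> stable p q -> unit_allpass p q ->
  real_poles p q ->
  exists e s, (e = 0 \/ e = pi) /\ okseq s /\ size s = (size q).-1 /\
    forall w, rat_eval p q (expj w) = expj (Phi e s w).
Proof.
move=> hrr hst hap hrp.
have [s [hs [hsz hQ]]] := roots_q p q hrr hrp hst.
have [k [hk hP]] := allpass_form p q hrr hst hap.
have lc0 : lead_coef q != 0 by rewrite lead_coef_eq0; case: hrr.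
pose e : R := if k == 1 then 0 else pi.
have he : expj e = k%:C.
  rewrite /e; case: hk => ->; rewrite ?eqxx ?expj0 //.
  have -> : (-1 == 1 :> R) = false by apply/eqP => h; have := @ltr01 R; rewrite -h; lra.
  by rewrite expj_pi; apply: cE; rewrite !cs ?oppr0.
exists e, s; split; first by rewrite /e; case: (k == 1); [left|right].
split => //; split => // w.
rewrite /rat_eval hP hQ -hsz.
have hz : forall a, a \in s -> expj w - a%:C != 0.
  by move=> a ha; apply: za_neq0; move/allP: hs => /(_ a ha).
rewrite -[in LHS]mulrA -[in LHS]mulrA prodfac // prod_factor //.
by rewrite /Phi expjD he.
Qed.

End F.
Arguments structure {R}.


Lemma cos1_small (R : realType) (x : R) : cos x = 1 -> `|x| < pi -> x = 0.
Proof.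
move=> hc hx; apply/eqP; rewrite -normr_eq0; apply: contraT => hx0.
have hpos : 0 < `|x| by rewrite lt_def hx0 normr_ge0.
have hcx : cos `|x| = 1.
  by have [h|h] := lerP 0 x; [rewrite ger0_norm | rewrite ltr0_norm // cosN].
have p0 : (0 : R) < pi := pi_gt0 R.
have i0 : (0 : R) \in `[0, pi] by rewrite in_itv /= lexx ltW.
have ix : `|x| \in `[0, pi] by rewrite in_itv /= normr_ge0 ltW.
by have := ltr_cos i0 ix; rewrite cos0 hcx ltxx hpos.
Qed.

Theorem lemma3 (R : realType) (n : nat) (p q : {poly R}) :
  real_rational p q -> rat_order p q = n -> stable p q ->
  unit_allpass p q -> real_poles p q ->
  forall theta : R -> R, cont_arg p q theta ->
  forall wp : R, - pi < wp < pi -> wp != 0 ->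
    derivable theta wp 1 /\
    derive1 theta wp <= - `| sin (theta wp) / sin wp | /\
    ((n <= 1)%N -> derive1 theta wp = - `| sin (theta wp) / sin wp |).
Proof.
move=> hrr hord hst hap hrp theta [hcont htheta] wp /andP[w1 w2] wp0.
have [e [s [he [hs [hsz hf]]]]] := structure p q hrr hst hap hrp.
have hn : n = size s.
  rewrite -hord /rat_order hsz; apply/maxn_idPr.
  by case: hst => hps _; rewrite -!subn1 leq_sub2r.
set Ph := Phi e s.
have hD := is_derive_Phi e s wp hs.
have heq w : expj (theta w) = expj (Ph w) by rewrite -htheta hf.
have hcs w : cos (theta w - Ph w) = 1 /\ sin (theta w - Ph w) = 0.
  have hc : cos (theta w) = cos (Ph w) := congr1 (@complex.Re R) (heq w).
  have hs' : sin (theta w) = sin (Ph w) := congr1 (@complex.Im R) (heq w).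
  rewrite cosB sinB hc hs'; split; last by ring.
  by rewrite -(cos2Dsin2 (Ph w)); ring.
case: (hD) => dPh _.
have cPh : {for wp, continuous Ph}.
  exact: differentiable_continuous (proj1 (derivable1_diffP _ _) dPh).
have ch : ((theta - Ph) x @[x --> wp] --> (theta wp - Ph wp))%classic.
  by apply: cvgB; [exact: hcont | exact: cPh].
have hnear : \forall t \near wp, `|(theta wp - Ph wp) - (theta - Ph) t| < pi.
  by move/cvgr_dist_lt: ch; apply; exact: pi_gt0.
have hloc : \forall w \near wp, Ph w + (theta wp - Ph wp) = theta w.
  apply: filterS hnear => w /= hw.
  have [c1 s1] := hcs wp; have [c2 s2] := hcs w.
  have hc : cos ((theta wp - Ph wp) - (theta w - Ph w)) = 1.
    by rewrite cosB c1 c2 s1 s2; ring.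
  have := cos1_small _ _ hc hw; lra.
have hT : is_derive wp 1 theta (dPhi s wp).
  apply: (near_eq_is_derive hloc).
  have H := is_deriveD hD (is_derive_cst (theta wp - Ph wp) wp 1).
  apply: (is_derive_eq H); by rewrite addr0.
case: hT => hder hval.
split; first exact: hder.
rewrite derive1E hval.
have hsin : sin (theta wp) = sin (Ph wp) := congr1 (@complex.Im R) (heq wp).
rewrite hsin.
have sw0 : sin wp != 0.
  have [h|h|h] := ltrgtP wp 0; last by rewrite h eqxx in wp0.
    have : 0 < sin (- wp) by apply: sin_gt0_pi; rewrite oppr_gt0 h /= ltrNl.
    by rewrite sinN oppr_gt0 => /ltr0_neq0.
  by apply: lt0r_neq0; apply: sin_gt0_pi; rewrite h w2.
have [h1 h2] := main_ineq e s wp hs he sw0.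
split => // hn1; apply: h2; by rewrite -hn.
Qed.
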